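(* Consider the online class matching problem in the divisible setting (described in the context). For every $\gamma \in [0,1]$, there exists an online divisible algorithm that is simultaneously $\left(1 - \frac{e^{\gamma-1}}{\gamma+1}\right)$-USW and $(1-e^{-\gamma})$-CEF.
   Context: Online class matching: an instance is a bipartite graph $G=(N,M,E)$ with a set $N$ of agents (known in advance), a set $M$ of items, and $E \subseteq M \times N$; agent $a$ likes item $o$ iff $(o,a)\in E$. The agents are partitioned into $k$ known classes $N_1,\dots,N_k$. Items arrive one at a time in an adversarially chosen order; when item $o$ arrives, the set of agents liking $o$ is revealed and the algorithm must immediately and irrevocably assign (in the divisible setting, fractions of) $o$ to agents liking it. A fractional matching is $X=(x_{o,a})\in[0,1]^{M\times N}$ supported on $E$ with $\sum_a x_{o,a}\le 1$ for every item $o$ and $\sum_o x_{o,a}\le 1$ for every agent $a$. The value of agent $a$ is $V_a(X)=\sum_o x_{o,a}$ and the class value is $V_i(X)=\sum_{a\in N_i}V_a(X)$. For each class $j$, let $y_j(X)\in[0,1]^M$ with $y_j(X)_o=\sum_{a\in N_j}x_{o,a}$. For $y\in[0,1]^M$, the optimistic valuation $V_i^*(y)$ is the maximum size of a fractional matching using edges of $E$ between $N_i$ and $M$ in which each item $o$ has fractional degree at most $y_o$ and each agent has fractional degree at most $1$. The utilitarian social welfare is $\mathrm{usw}(X)=\sum_i V_i(X)$. A (possibly randomized) online algorithm outputting $X$ is $\alpha$-CEF if on every instance, for all classes $i,j$, $\mathbb{E}[V_i(X)]\ge \alpha\,\mathbb{E}[V_i^*(y_j(X))]$; it is $\beta$-USW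 if on every instance $\mathbb{E}[\mathrm{usw}(X)]\ge \beta\cdot \mathrm{usw}(X^* )$ for every fractional matching $X^*$ of $G$. *)

(* Defs.v *)
From HB Require Import structures.
From mathcomp Require Import all_boot all_order all_algebra.
From mathcomp Require Import all_classical reals sequences.
Set Implicit Arguments. Unset Strict Implicit. Unset Printing Implicit Defensive.
Import Order.TTheory GRing.Theory Num.Theory.
Local Open Scope ring_scope.
Local Open Scope classical_set_scope.

(* An instance: agents 'I_n, classes 'I_k with class map [cls], items 'I_m
   indexed by arrival time (item o arrives at step o; the adversarial order is
   thus encoded by the adversary's choice of E), and [E o] = the set of agents
   liking item o. *)

Section OnlineClassMatching.
Variable R : realType.

Definition frac_matching n m (E : 'I_m -> {set 'I_n}) (x : 'I_m -> 'I_n -> R) :=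
  [/\ forall o a, 0 <= x o a,
      forall o a, a \notin E o -> x o a = 0,
      forall o, \sum_(a < n) x o a <= 1 &
      forall a, \sum_(o < m) x o a <= 1].

Definition agent_val n m (x : 'I_m -> 'I_n -> R) (a : 'I_n) : R :=
  \sum_(o < m) x o a.

Definition class_val n k m (cls : 'I_n -> 'I_k) (x : 'I_m -> 'I_n -> R)
  (i : 'I_k) : R := \sum_(a < n | cls a == i) agent_val x a.

Definition usw n m (x : 'I_m -> 'I_n -> R) : R := \sum_(a < n) agent_val x a.

Definition class_alloc n k m (cls : 'I_n -> 'I_k) (x : 'I_m -> 'I_n -> R)
  (j : 'I_k) : 'I_m -> R := fun o => \sum_(a < n | cls a == j) x o a.

(* optimistic valuation V_i^*(y): maximum size of a fractional matching using
   edges of E between N_i and M, item o having degree <= y o and every agent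
   degree <= 1 (the maximum is attained; we write it as a supremum). *)
Definition opt_val n k m (cls : 'I_n -> 'I_k) (E : 'I_m -> {set 'I_n})
  (i : 'I_k) (y : 'I_m -> R) : R :=
  sup [set v | exists z : 'I_m -> 'I_n -> R,
     [/\ forall o a, 0 <= z o a,
         forall o a, (a \notin E o) || (cls a != i) -> z o a = 0,
         forall o, \sum_(a < n) z o a <= y o,
         forall a, \sum_(o < m) z o a <= 1 &
         v = \sum_(o < m) \sum_(a < n | cls a == i) z o a]].

(* A deterministic online divisible algorithm: knowing the agents (n), the
   classes (k, cls) in advance, and the sequence of neighbourhoods of the items
   arrived so far (the last one being the current item), it outputs the
   fractions of the current item given to each agent.  (Its own past decisions
   are a function of the same data, so they are implicitly available.)  It
   does not know the number of items or the future items. *)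
Definition online_alg :=
  forall (n k : nat), ('I_n -> 'I_k) -> seq {set 'I_n} -> 'I_n -> R.

Definition run (A : online_alg) n k (cls : 'I_n -> 'I_k) m
  (E : 'I_m -> {set 'I_n}) : 'I_m -> 'I_n -> R :=
  fun o a => A n k cls [seq E j | j <- take o.+1 (enum 'I_m)] a.

Definition randomized_alg r (p : 'I_r -> R) (A : 'I_r -> online_alg) :=
  [/\ forall s, 0 <= p s,
      \sum_(s < r) p s = 1 &
      forall s n k (cls : 'I_n -> 'I_k) m (E : 'I_m -> {set 'I_n}),
        frac_matching E (run (A s) cls E)].

Definition expect r (p : 'I_r -> R) (A : 'I_r -> online_alg)
  (f : online_alg -> R) : R := \sum_(s < r) p s * f (A s).

Definition is_CEF r (p : 'I_r -> R) (A : 'I_r -> online_alg) (alpha : R) :=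
  forall n k (cls : 'I_n -> 'I_k) m (E : 'I_m -> {set 'I_n}) (i j : 'I_k),
    expect p A (fun B => class_val cls (run B cls E) i) >=
    alpha * expect p A (fun B => opt_val cls E i (class_alloc cls (run B cls E) j)).

Definition is_USW r (p : 'I_r -> R) (A : 'I_r -> online_alg) (beta : R) :=
  forall n k (cls : 'I_n -> 'I_k) m (E : 'I_m -> {set 'I_n})
    (xstar : 'I_m -> 'I_n -> R),
    frac_matching E xstar ->
    expect p A (fun B => usw (run B cls E)) >= beta * usw xstar.

End OnlineClassMatching.

(* Main.v *)
Require Import Defs.
From HB Require Import structures.
From mathcomp Require Import all_boot all_order all_algebra.
From mathcomp Require Import all_classical reals sequences.
From mathcomp Require Import topology normedtype exp.
From mathcomp Require Import lra.
Import Order.TTheory GRing.Theory Num.Theory.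
Import numFieldNormedType.Exports.
Local Open Scope ring_scope.
Set Implicit Arguments. Unset Strict Implicit. Unset Printing Implicit Defensive.

Ltac mm := repeat match goal with
 | |- context [@Order.min _ _ ?a ?b] => let h := fresh "h" in case: (leP a b) => h
 | |- context [@Order.max _ _ ?a ?b] => let h := fresh "h" in case: (leP a b) => h
 | H : context [@Order.min _ _ ?a ?b] |- _ => let h := fresh "h" in move: H; case: (leP a b) => h H
 | H : context [@Order.max _ _ ?a ?b] |- _ => let h := fresh "h" in move: H; case: (leP a b) => h H
 end.
Section S.
Variable R : realType.

Definition clamp (v q : R) : R := Num.min (Num.max v 0) q.

Lemma clamp_cont (p q : R) : continuous (fun L : R => clamp (L - p) q).
Proof.
move=> x.
apply: (@continuous_min R R (fun L : R => Num.max (L - p) 0) (fun=> q)).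
  apply: (@continuous_max R R (fun L : R => L - p) (fun=> 0)).
    apply: continuousB; [exact: cvg_id | exact: cst_continuous].
  exact: cst_continuous.
exact: cst_continuous.
Qed.

Lemma sum_clamp_cont (I : Type) (r : seq I) (P : pred I) (p q : I -> R) :
  continuous (fun L : R => \sum_(i <- r | P i) clamp (L - p i) (q i)).
Proof.
elim: r => [|i r IH].
  under eq_fun do rewrite big_nil. exact: cst_continuous.
under eq_fun do rewrite big_cons.
case: (P i).
  move=> x; apply: (@continuousD R R^o R (fun L : R => clamp (L - p i) (q i)) (fun L : R => \sum_(j <- r | P j) clamp (L - p j) (q j))); [exact: clamp_cont | exact: IH].
exact: IH.
Qed.

Lemma le_sum_one (I : finType) (f : I -> R) i : (forall j, 0 <= f j) -> f i <= \sum_j f j.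
Proof.
move=> f0; rewrite (bigD1 i) //= lerDl; apply: sumr_ge0 => j _; exact: f0.
Qed.

Lemma clamp_exists (I : finType) (P : pred I) (p q : I -> R) t :
  (forall i, 0 <= q i) -> 0 <= t <= \sum_(i | P i) q i ->
  exists L, \sum_(i | P i) clamp (L - p i) (q i) = t.
Proof.
move=> q0 /andP[t0 tS].
have hp : forall i, `|p i| <= \sum_j `|p j|.
  by move=> i; have := @le_sum_one I (fun j => `|p j|) i; apply.
have hq : forall i, `|p i| + q i <= \sum_j (`|p j| + q j).
  by move=> i; have := @le_sum_one I (fun j => `|p j| + q j) i; apply => j; rewrite addr_ge0.
have Fa : \sum_(i | P i) clamp (- \sum_j `|p j| - p i) (q i) = 0.
  apply: big1 => i _; rewrite /clamp.
  have h : - \sum_j `|p j| - p i <= 0.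
    rewrite subr_le0 lerNl; apply: le_trans (hp i); rewrite -normrN; exact: ler_norm.
  by rewrite (max_r h) (min_l (q0 i)).
have Fb : \sum_(i | P i) clamp (\sum_j (`|p j| + q j) - p i) (q i) = \sum_(i | P i) q i.
  apply: eq_bigr => i _; rewrite /clamp.
  have h : q i <= \sum_j (`|p j| + q j) - p i.
    rewrite lerBrDr; apply: le_trans (hq i); rewrite addrC lerD2r; exact: ler_norm.
  by rewrite max_l ?(le_trans (q0 i) h) // min_r.
have ab : - \sum_j `|p j| <= \sum_j (`|p j| + q j).
  apply: (@le_trans _ _ 0).
    by rewrite oppr_le0 sumr_ge0.
  by rewrite sumr_ge0 // => i _; rewrite addr_ge0.
have [||c _ Fc] := @IVT R (fun L => \sum_(i | P i) clamp (L - p i) (q i)) _ _ t ab.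
- by apply: continuous_subspaceT; exact: sum_clamp_cont.
- by rewrite Fa Fb (min_l (le_trans t0 tS)) (max_r (le_trans t0 tS)) t0 tS.
by exists c.
Qed.
End S.

Lemma A1 (R : realType) (l g : R) : l + Num.max (g - l) 0 = Num.max l g.
Proof. mm; lra. Qed.
Lemma A2 (R : realType) (M L : R) : M <= 1 -> M + clamp (L - M) (1 - M) = Num.max M (Num.min L 1).
Proof. rewrite /clamp => ?; mm; lra. Qed.
Lemma A3 (R : realType) (l L g : R) : l + clamp (L - l) (Num.max (g - l) 0) = Num.max l (Num.min L g).
Proof. rewrite /clamp; mm; lra. Qed.

Lemma A4 (R : realType) (l g L : R) : l <= 1 ->
  0 < Num.max (g - l) 0 + clamp (L - Num.max l g) (1 - Num.max l g) ->
  Num.max (Num.max l g) (Num.min L 1) = Num.max g (Num.min L 1).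
Proof.
move=> l1; case: (leP l g) => hlg; first by [].
have -> : Num.max (g - l) 0 = 0 by apply: max_r; lra.
rewrite add0r /clamp => hp.
have hL : l < L /\ l < 1 by move: hp; mm; lra.
case: hL => hL1 hL2.
by mm; lra.
Qed.
Lemma A5 (R : realType) (l L g : R) : 0 < clamp (L - l) (Num.max (g - l) 0) ->
  Num.max l (Num.min L g) = Num.min L g.
Proof.
rewrite /clamp => hp.
have hL : l < L /\ l < g by move: hp; mm; lra.
case: hL => hL1 hL2.
by mm; lra.
Qed.

Section Step.
Variable R : realType.
Variable g : R.
Hypothesis hg : 0 <= g <= 1.

Definition pickL (I : finType) (P : pred I) (p q : I -> R) (t : R) : R :=
  xget 0 [set L | \sum_(i | P i) clamp (L - p i) (q i) = t].

Lemma pickLP (I : finType) (P : pred I) (p q : I -> R) t :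
  (forall i, 0 <= q i) -> 0 <= t <= \sum_(i | P i) q i ->
  \sum_(i | P i) clamp (pickL P p q t - p i) (q i) = t.
Proof.
move=> q0 ht; rewrite /pickL.
by have := xgetPex 0 (@clamp_exists R I P p q t q0 ht).
Qed.

Lemma clamp_ge0 (v q : R) : 0 <= q -> 0 <= clamp v q.
Proof. by rewrite /clamp => q0; mm; lra. Qed.
Lemma clamp_le (v q : R) : 0 <= q -> clamp v q <= q.
Proof. by rewrite /clamp => q0; mm; lra. Qed.

Lemma sum_clamp_full (I : finType) (P : pred I) (p q : I -> R) L :
  (forall i, 0 <= q i) ->
  \sum_(i | P i) clamp (L - p i) (q i) = \sum_(i | P i) q i ->
  forall i, P i -> clamp (L - p i) (q i) = q i.
Proof.
move=> q0 hs i Pi.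
have h0 : \sum_(i | P i) (q i - clamp (L - p i) (q i)) = 0.
  by rewrite sumrB hs subrr.
have F0 : forall j, P j -> 0 <= q j - clamp (L - p j) (q j).
  by move=> j _; rewrite subr_ge0 clamp_le.
have H := psumr_eq0P F0 h0 Pi.
lra.
Qed.

Definition c1 (l : R) := Num.max (g - l) 0.
Definition c2 (l : R) := 1 - Num.max l g.

Lemma c1_ge0 (l : R) : 0 <= c1 l.
Proof. by rewrite /c1; mm; lra. Qed.
Lemma c2_ge0 (l : R) : l <= 1 -> 0 <= c2 l.
Proof. by case/andP: hg => ? ?; rewrite /c2 => ?; mm; lra. Qed.

Variables (n k : nat) (cls : 'I_n -> 'I_k) (l : 'I_n -> R) (S : {set 'I_n}).

Definition Ccls (i : 'I_k) := \sum_(a | (a \in S) && (cls a == i)) c1 (l a).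
Definition Ctot := \sum_i Ccls i.
Definition caseI := (1 <= Ctot).
Definition Tlev := pickL (fun _ : 'I_k => true) (fun _ => 0) Ccls 1.
Definition tcls i := if caseI then clamp (Tlev - 0) (Ccls i) else Ccls i.
Definition Lcls i := pickL (fun a => (a \in S) && (cls a == i)) l (fun a => c1 (l a)) (tcls i).
Definition x1 a := if a \in S then clamp (Lcls (cls a) - l a) (c1 (l a)) else 0.
Definition t2 := if caseI then 0 else Num.min (1 - Ctot) (\sum_(a | a \in S) c2 (l a)).
Definition L2 := pickL (fun a => a \in S) (fun a => Num.max (l a) g) (fun a => c2 (l a)) t2.
Definition x2 a := if a \in S then clamp (L2 - Num.max (l a) g) (c2 (l a)) else 0.
Definition step a := x1 a + x2 a.

Hypothesis hl : forall a, 0 <= l a <= 1.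

Lemma c2l_ge0 a : 0 <= c2 (l a).
Proof. by apply: c2_ge0; case/andP: (hl a). Qed.

Lemma Ccls_ge0 i : 0 <= Ccls i.
Proof. by apply: sumr_ge0 => a _; exact: c1_ge0. Qed.

Lemma tcls_bd i : 0 <= tcls i <= Ccls i.
Proof.
rewrite /tcls; case: ifP => _; last by rewrite Ccls_ge0 lexx.
by rewrite clamp_ge0 ?clamp_le ?Ccls_ge0.
Qed.

Lemma sum_tcls_I : caseI -> \sum_i tcls i = 1.
Proof.
move=> hI; rewrite /tcls hI.
have := @pickLP 'I_k (fun _ => true) (fun _ => 0) Ccls 1 Ccls_ge0.
by rewrite ler01 /=; apply.
Qed.

Lemma sum_tcls_II : ~~ caseI -> \sum_i tcls i = Ctot.
Proof. by move=> hI; rewrite /tcls (negbTE hI). Qed.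

Lemma sum_x1_cls i : \sum_(a | cls a == i) x1 a = tcls i.
Proof.
have := @pickLP _ (fun a => (a \in S) && (cls a == i)) l (fun a => c1 (l a)) (tcls i) (fun a => c1_ge0 _) (tcls_bd i).
rewrite -/(Lcls i) => <-.
rewrite [RHS]big_mkcond [LHS]big_mkcond; apply: eq_bigr => a _ /=.
rewrite /x1; case: (a \in S) => /=; last by case: ifP.
by case: eqP => // ->.
Qed.

Lemma t2_bd : 0 <= t2 <= \sum_(a | a \in S) c2 (l a).
Proof.
rewrite /t2; case: ifP => hI.
  by rewrite lexx sumr_ge0 // => a _; exact: c2l_ge0.
have h1 : 0 <= 1 - Ctot by move/negbT: hI; rewrite /caseI -ltNge; lra.
have h2 : 0 <= \sum_(a | a \in S) c2 (l a) by rewrite sumr_ge0 // => a _; exact: c2l_ge0.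
by mm; lra.
Qed.

Lemma sum_x2 : \sum_a x2 a = t2.
Proof.
have := @pickLP _ (fun a => a \in S) (fun a => Num.max (l a) g) (fun a => c2 (l a)) t2 c2l_ge0 t2_bd.
rewrite -/L2 => <-.
by rewrite [RHS]big_mkcond; apply: eq_bigr => a _ /=; rewrite /x2.
Qed.


Lemma hg0 : 0 <= g. Proof. by case/andP: hg. Qed.
Lemma hg1 : g <= 1. Proof. by case/andP: hg. Qed.
Lemma hl0 a : 0 <= l a. Proof. by case/andP: (hl a). Qed.
Lemma hl1 a : l a <= 1. Proof. by case/andP: (hl a). Qed.

Lemma x1_ge0 a : 0 <= x1 a.
Proof. by rewrite /x1; case: ifP => // _; rewrite clamp_ge0 // c1_ge0. Qed.
Lemma x2_ge0 a : 0 <= x2 a.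
Proof. by rewrite /x2; case: ifP => // _; rewrite clamp_ge0 // c2l_ge0. Qed.
Lemma x1_le a : x1 a <= c1 (l a).
Proof. by rewrite /x1; case: ifP => _; rewrite ?clamp_le ?c1_ge0. Qed.
Lemma x2_le a : x2 a <= c2 (l a).
Proof. by rewrite /x2; case: ifP => _; rewrite ?clamp_le ?c2l_ge0. Qed.
Lemma step_ge0 a : 0 <= step a.
Proof. by rewrite /step addr_ge0 ?x1_ge0 ?x2_ge0. Qed.
Lemma step_out a : a \notin S -> step a = 0.
Proof. by move=> /negbTE h; rewrite /step /x1 /x2 h addr0. Qed.
Lemma step_cap a : l a + step a <= 1.
Proof.
have h1 := x1_le a; have h2 := x2_le a; have := hl1 a; have := hl0 a; have := hg0; have := hg1.
move: h1 h2; rewrite /step /c1 /c2 => h1 h2; mm; lra.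
Qed.

Lemma sum_x1 : \sum_a x1 a = \sum_i tcls i.
Proof.
rewrite (partition_big cls xpredT) //=; apply: eq_bigr => i _.
exact: sum_x1_cls.
Qed.

Lemma sum_step : \sum_a step a = \sum_i tcls i + t2.
Proof. by rewrite /step big_split /= sum_x1 sum_x2. Qed.

Lemma x2_zero_I a : caseI -> x2 a = 0.
Proof.
move=> hI; have h0 : \sum_(b | true) x2 b = 0 by rewrite sum_x2 /t2 hI.
exact: (psumr_eq0P (fun b _ => x2_ge0 b) h0).
Qed.

Lemma sum_le1 : \sum_a step a <= 1.
Proof.
rewrite sum_step; case hI: caseI.
  by rewrite sum_tcls_I // /t2 hI addr0.
rewrite sum_tcls_II ?hI // /t2 hI.
have := t2_bd; rewrite /t2 hI => _; mm; lra.
Qed.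

Lemma x1_full_II a : ~~ caseI -> a \in S -> x1 a = c1 (l a).
Proof.
move=> hI aS.
have h := @pickLP _ (fun b => (b \in S) && (cls b == cls a)) l (fun b => c1 (l b)) (tcls (cls a)) (fun b => c1_ge0 _) (tcls_bd (cls a)).
rewrite /x1 aS.
have Pa : (a \in S) && (cls a == cls a) by rewrite aS eqxx.
have hs : \sum_(b | (b \in S) && (cls b == cls a)) clamp (Lcls (cls a) - l b) (c1 (l b)) = \sum_(b | (b \in S) && (cls b == cls a)) c1 (l b).
  by rewrite h /tcls (negbTE hI).
exact: (sum_clamp_full (fun b => c1_ge0 (l b)) hs Pa).
Qed.

Lemma sum_lt1_full : \sum_a step a < 1 -> forall a, a \in S -> l a + step a = 1.
Proof.
move=> hs a aS.
have hI : ~~ caseI.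
  apply/negP => hI; move: hs; rewrite sum_step sum_tcls_I // /t2 hI; lra.
have e1 := x1_full_II hI aS.
move: hs; rewrite sum_step sum_tcls_II // => hs.
have ht2 : t2 = \sum_(b | b \in S) c2 (l b).
  move: hs; rewrite /t2 (negbTE hI) /=; mm; lra.
have h := @pickLP _ (fun b => b \in S) (fun b => Num.max (l b) g) (fun b => c2 (l b)) t2 c2l_ge0 t2_bd.
have e2 : x2 a = c2 (l a).
  rewrite /x2 aS.
  have hs' : \sum_(b | b \in S) clamp (L2 - Num.max (l b) g) (c2 (l b)) = \sum_(b | b \in S) c2 (l b).
    by rewrite h -ht2.
  exact: (sum_clamp_full c2l_ge0 hs' aS).
rewrite /step e1 e2 /c1 /c2; have := hl1 a; have := hg1; mm; lra.
Qed.

Lemma lvl_I a : caseI -> a \in S -> l a + step a = Num.max (l a) (Num.min (Lcls (cls a)) g).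
Proof.
move=> hI aS; rewrite /step (x2_zero_I _ hI) addr0 /x1 aS /c1 A3 //.
Qed.

Lemma lvl_II a : ~~ caseI -> a \in S ->
  l a + step a = Num.max (Num.max (l a) g) (Num.min L2 1).
Proof.
move=> hI aS; rewrite /step (x1_full_II hI aS) /x2 aS /c1 /c2 addrA A1 A2 //.
have := hl1 a; have := hg1; mm; lra.
Qed.

Lemma pos_in a : 0 < step a -> a \in S.
Proof. by apply: contraTT => h; rewrite step_out // ltxx. Qed.

Lemma pos_I a : caseI -> 0 < step a -> l a + step a = Num.min (Lcls (cls a)) g.
Proof.
move=> hI hp; have aS := pos_in hp.
move: hp; rewrite (lvl_I hI aS) /step (x2_zero_I _ hI) addr0 /x1 aS /c1.
exact: A5.
Qed.

Lemma pos_II a : ~~ caseI -> 0 < step a -> l a + step a = Num.max g (Num.min L2 1).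
Proof.
move=> hI hp; have aS := pos_in hp.
move: hp; rewrite (lvl_II hI aS) /step (x1_full_II hI aS) /x2 aS /c1 /c2.
exact: A4 (hl1 a).
Qed.

Lemma spec_same_class a b : 0 < step a -> b \in S -> cls a = cls b ->
  l a + step a <= l b + step b.
Proof.
move=> hp bS e; case hI: caseI.
  by rewrite (pos_I hI hp) (lvl_I hI bS) e; mm; lra.
have hI' : ~~ caseI by rewrite hI.
by rewrite (pos_II hI' hp) (lvl_II hI' bS); mm; lra.
Qed.

Lemma spec_usw a b : 0 < step b -> a \in S ->
  (l b + step b <= g) \/ (l b + step b <= l a + step a).
Proof.
move=> hp aS; case hI: caseI.
  by left; rewrite (pos_I hI hp); mm; lra.
have hI' : ~~ caseI by rewrite hI.
by right; rewrite (pos_II hI' hp) (lvl_II hI' aS); mm; lra.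
Qed.

Lemma cls_amount_I i : caseI -> \sum_(a | cls a == i) step a = tcls i.
Proof.
move=> hI; rewrite -sum_x1_cls; apply: eq_bigr => a _.
by rewrite /step (x2_zero_I _ hI) addr0.
Qed.

Lemma spec_cef b : b \in S -> l b + step b < g ->
  forall j, \sum_(a | cls a == j) step a <= \sum_(a | cls a == cls b) step a.
Proof.
move=> bS hb j.
case hI: caseI; last first.
  have hI' : ~~ caseI by rewrite hI.
  by move: hb; rewrite (lvl_II hI' bS); mm; lra.
rewrite !cls_amount_I //.
have hne : tcls (cls b) < Ccls (cls b).
  rewrite lt_neqAle; case/andP: (tcls_bd (cls b)) => _ ->; rewrite andbT.
  apply/eqP => e.
  have h := @pickLP _ (fun c => (c \in S) && (cls c == cls b)) l (fun c => c1 (l c)) (tcls (cls b)) (fun c => c1_ge0 _) (tcls_bd (cls b)).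
  have e1 : x1 b = c1 (l b).
    rewrite /x1 bS.
    have Pb : (b \in S) && (cls b == cls b) by rewrite bS eqxx.
    have hs : \sum_(c | (c \in S) && (cls c == cls b)) clamp (Lcls (cls b) - l c) (c1 (l c)) = \sum_(c | (c \in S) && (cls c == cls b)) c1 (l c).
      by rewrite h e.
    exact: (sum_clamp_full (fun c => c1_ge0 (l c)) hs Pb).
  by move: hb; rewrite /step e1 (x2_zero_I _ hI) /c1; mm; lra.
move: hne; rewrite /tcls hI /clamp; have := Ccls_ge0 j; mm; lra.
Qed.

End Step.

Section Reals.
Variable R : realType.
Variable g : R.
Hypothesis hg : 0 <= g <= 1.

Lemma CV (a b : R) : a <= b -> expR b - expR a <= (b - a) * expR b.
Proof.
move=> ab.
have h := expR_ge1Dx (a - b).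
have e : expR a = expR b * expR (a - b) by rewrite -expRD addrCA subrr addr0.
have eb := expR_gt0 b.
rewrite e; nra.
Qed.

Definition u := expR (g - 1) / (g + 1).
Lemma hu : u * (g + 1) = expR (g - 1).
Proof. by rewrite /u divfK //; case/andP: hg => h0 _; apply/eqP => e; lra. Qed.
Lemma u_ge0 : 0 <= u.
Proof. by rewrite /u divr_ge0 ?expR_ge0 //; case/andP: hg => h0 _; lra. Qed.
Lemma u_le : u <= expR (g - 1).
Proof. have := hu; have := u_ge0; case/andP: hg => h0 _; nra. Qed.

Definition Phi (x : R) := u * Num.min x g + expR (Num.max x g - 1) - expR (g - 1).
Definition gh (x : R) := if x <= g then u else expR (x - 1).
Definition cU := 1 - u.

Lemma Phi0 : Phi 0 = 0.
Proof.
case/andP: hg => h0 _; rewrite /Phi.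
rewrite (min_l h0) (max_r h0); lra.
Qed.

Lemma Phi1 : Phi 1 = cU.
Proof.
case/andP: hg => h0 h1; rewrite /Phi /cU (min_r h1) (max_l h1) subrr expR0.
have := hu; lra.
Qed.

Lemma Phi_mono x y : x <= y -> Phi x <= Phi y.
Proof.
move=> xy; rewrite /Phi.
have hm : Num.min x g <= Num.min y g by mm; lra.
have hM : Num.max x g - 1 <= Num.max y g - 1 by mm; lra.
have := u_ge0; rewrite -ler_expR in hM; nra.
Qed.

Lemma Phi_ge0 x : 0 <= x -> 0 <= Phi x.
Proof. by move=> x0; rewrite -Phi0; apply: Phi_mono. Qed.

Lemma gh_mono x y : x <= y -> gh x <= gh y.
Proof.
move=> xy; rewrite /gh; case: ifP => hx; case: ifP => hy //.
- by apply: le_trans u_le _; rewrite ler_expR; move/negbT: hy; rewrite -ltNge; lra.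
- by move/negbT: hx; rewrite -ltNge => hx; move: (le_trans xy hy); lra.
- by rewrite ler_expR; lra.
Qed.

Lemma gh_le1 x : x <= 1 -> gh x <= 1.
Proof.
move=> x1; rewrite /gh; case: ifP => _.
  apply: le_trans u_le _; rewrite -[X in _ <= X]expR0 ler_expR; case/andP: hg => ? ?; lra.
by rewrite -[X in _ <= X]expR0 ler_expR; lra.
Qed.

Lemma u_le_gh x : u <= gh x.
Proof.
rewrite /gh; case: ifP => h //; apply: le_trans u_le _; rewrite ler_expR.
by move/negbT: h; rewrite -ltNge; lra.
Qed.

Lemma gh_small x : x <= g -> gh x = u.
Proof. by rewrite /gh => ->. Qed.

Lemma Phi_diff x y : 0 <= x -> x <= y -> Phi y - Phi x <= (y - x) * gh y.
Proof.
move=> x0 xy; rewrite /Phi /gh.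
case: (leP y g) => hy.
  have hx : x <= g by lra.
  case: (leP x g) => hx'; last by lra.
  lra.
case: (leP x g) => hx.
  have h1 := CV (ltW (_ : g - 1 < y - 1)).
  have h2 : u <= expR (y - 1).
    apply: le_trans u_le _; rewrite ler_expR; lra.
  have h3 := h1 ltac:(lra).
  nra.
have h1 := CV (_ : x - 1 <= y - 1).
have h3 := h1 ltac:(lra).
have h4 := expR_gt0 (y - 1).
nra.
Qed.

Lemma Phi_gh x : 0 <= x -> x <= 1 -> cU <= Phi x + 1 - gh x.
Proof.
move=> x0 x1; rewrite /Phi /gh /cU.
have := hu; have := u_ge0; case/andP: hg => h0 h1.
case: (leP x g) => hx; nra.
Qed.

Definition Psi (x : R) := expR (Num.min x g - g) - expR (- g).
Definition gC (x : R) := expR (Num.min x g - g).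
Definition cC := 1 - expR (- g).

Lemma Psi0 : Psi 0 = 0.
Proof. by case/andP: hg => h0 _; rewrite /Psi (min_l h0) sub0r subrr. Qed.

Lemma gC_mono x y : x <= y -> gC x <= gC y.
Proof. by move=> xy; rewrite /gC ler_expR; mm; lra. Qed.

Lemma Psi_mono x y : x <= y -> Psi x <= Psi y.
Proof. by move=> xy; rewrite /Psi lerD2r; apply: gC_mono. Qed.

Lemma Psi_ge0 x : 0 <= x -> 0 <= Psi x.
Proof. by move=> x0; rewrite -Psi0; apply: Psi_mono. Qed.

Lemma gC_le1 x : gC x <= 1.
Proof. by rewrite /gC -[X in _ <= X]expR0 ler_expR; mm; lra. Qed.

Lemma gC_lt1 x : gC x < 1 -> x < g.
Proof.
rewrite /gC -[X in _ < X]expR0 ltr_expR; mm; lra.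
Qed.

Lemma Psi_gC x : Psi x + 1 - gC x = cC.
Proof. rewrite /Psi /gC /cC; lra. Qed.

Lemma Psi_diff x y : x <= y -> Psi y - Psi x <= (y - x) * gC y.
Proof.
move=> xy; rewrite /Psi /gC.
have hab : Num.min x g - g <= Num.min y g - g by mm; lra.
have hd : Num.min y g - g - (Num.min x g - g) <= y - x by mm; lra.
have h1 := CV hab.
have h2 := expR_gt0 (Num.min y g - g).
nra.
Qed.

End Reals.


Section BigMax.
Variable R : realType.
Lemma bmax_ge0 (I : finType) (P : pred I) (F : I -> R) : 0 <= \big[Num.max/0]_(i | P i) F i.
Proof. by apply: (big_rec (fun x => 0 <= x)) => // i x _ hx; rewrite le_max hx orbT. Qed.
Lemma bmax_ub (I : finType) (P : pred I) (F : I -> R) i : P i -> F i <= \big[Num.max/0]_(j | P j) F j.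
Proof. by move=> Pi; rewrite (bigD1 i) //= le_max lexx. Qed.
Lemma bmax_le (I : finType) (P : pred I) (F : I -> R) K : 0 <= K -> (forall i, P i -> F i <= K) ->
  \big[Num.max/0]_(i | P i) F i <= K.
Proof. by move=> K0 hF; apply: (big_ind (fun x => x <= K)) => // x y hx hy; rewrite ge_max hx hy. Qed.
Lemma bmax_cases (I : finType) (P : pred I) (F : I -> R) :
  \big[Num.max/0]_(i | P i) F i = 0 \/ exists2 i, P i & \big[Num.max/0]_(i | P i) F i = F i.
Proof.
apply: (big_rec (fun x => x = 0 \/ exists2 i, P i & x = F i)); first by left.
move=> i x Pi hx; case: (leP (F i) x) => _ //.
by right; exists i.
Qed.
End BigMax.

Section Alg.
Variable R : realType.
Variable g : R.

Definition levels n k (cls : 'I_n -> 'I_k) (h : seq {set 'I_n}) : 'I_n -> R :=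
  foldl (fun l S => fun a => l a + step g cls l S a) (fun _ => 0) h.

Definition alg : online_alg R := fun n k cls h a =>
  match h with [::] => 0 | S0 :: t => step g cls (levels cls (belast S0 t)) (last S0 t) a end.

Lemma alg_rcons n k (cls : 'I_n -> 'I_k) h S a :
  alg cls (rcons h S) a = step g cls (levels cls h) S a.
Proof. by case: h => [|x h] //=; rewrite belast_rcons last_rcons. Qed.

Lemma levels_rcons n k (cls : 'I_n -> 'I_k) h S a :
  levels cls (rcons h S) a = levels cls h a + step g cls (levels cls h) S a.
Proof. by rewrite /levels foldl_rcons. Qed.

Hypothesis hg : 0 <= g <= 1.

Lemma levels_bd n k (cls : 'I_n -> 'I_k) h a : 0 <= levels cls h a <= 1.
Proof.
move: a; elim/last_ind: h => [|h S IH] a; first by rewrite /levels /= lexx ler01.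
rewrite levels_rcons; apply/andP; split.
  apply: addr_ge0; [by case/andP: (IH a) | exact: (step_ge0 hg _ _ IH)].
exact: (step_cap hg _ _ IH).
Qed.

Variables (n k : nat) (cls : 'I_n -> 'I_k) (m : nat) (E : 'I_m -> {set 'I_n}).

Definition hs (o : nat) := [seq E j | j <- take o (enum 'I_m)].
Definition lev (o : nat) := levels cls (hs o).
Definition X := run alg cls E.

Lemma hs_succ (o : 'I_m) : hs o.+1 = rcons (hs o) (E o).
Proof.
rewrite /hs (take_nth o) ?size_enum_ord ?ltn_ord // map_rcons.
by rewrite nth_ord_enum.
Qed.

Lemma X_eq (o : 'I_m) a : X o a = step g cls (lev o) (E o) a.
Proof. by rewrite /X /run -/(hs o.+1) hs_succ alg_rcons. Qed.

Lemma lev_bd o a : 0 <= lev o a <= 1.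
Proof. exact: levels_bd. Qed.
Lemma lev_bd' o : forall a, 0 <= lev o a <= 1.
Proof. by move=> a; exact: levels_bd. Qed.

Lemma lev_succ (o : 'I_m) a : lev o.+1 a = lev o a + X o a.
Proof. by rewrite X_eq /lev hs_succ levels_rcons. Qed.

Lemma X_ge0 o a : 0 <= X o a.
Proof. by rewrite X_eq; exact: (step_ge0 hg _ _ (lev_bd' o)). Qed.

Lemma X_out o a : a \notin E o -> X o a = 0.
Proof. by rewrite X_eq; exact: step_out. Qed.

Lemma lev0 a : lev 0 a = 0.
Proof. by rewrite /lev /hs take0. Qed.

Lemma lev_step_mono o a : lev o a <= lev o.+1 a.
Proof.
case: (ltnP o m) => h.
  by rewrite (lev_succ (Ordinal h)) lerDl X_ge0.
by rewrite /lev /hs !take_oversize ?size_enum_ord // (leq_trans h).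
Qed.

Lemma lev_mono o o' a : (o <= o')%N -> lev o a <= lev o' a.
Proof.
move/subnKC => <-; elim: (o' - o)%N => [|d IH]; first by rewrite addn0.
by apply: le_trans IH _; rewrite addnS; exact: lev_step_mono.
Qed.

Lemma sum_D (F : R -> R) a :
  \sum_(o < m) (F (lev o.+1 a) - F (lev o a)) = F (lev m a) - F (lev 0 a).
Proof.
rewrite -(big_mkord xpredT (fun o => F (lev o.+1 a) - F (lev o a))).
by rewrite telescope_sumr.
Qed.

Lemma sum_X a : \sum_(o < m) X o a = lev m a.
Proof.
have := sum_D id a; rewrite lev0 subr0 => <-.
by apply: eq_bigr => o _; rewrite lev_succ addrC addKr.
Qed.

Lemma X_frac : frac_matching E X.
Proof.
split.
- exact: X_ge0.
- exact: X_out.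
- by move=> o; rewrite (eq_bigr _ (fun a _ => X_eq o a)); exact: (sum_le1 hg _ _ (lev_bd' o)).
- by move=> a; rewrite sum_X; case/andP: (lev_bd m a).
Qed.

Definition beta (o : 'I_m) := \sum_a (X o a - (Phi g (lev o.+1 a) - Phi g (lev o a))).

Lemma beta_term (o : 'I_m) a :
  X o a * (1 - gh g (lev o.+1 a)) <= X o a - (Phi g (lev o.+1 a) - Phi g (lev o a)).
Proof.
have h0 : 0 <= lev o a by case/andP: (lev_bd o a).
have h := Phi_diff hg h0 (lev_step_mono o a).
have e2 : lev o.+1 a - lev o a = X o a by rewrite lev_succ; lra.
rewrite e2 in h; lra.
Qed.

Lemma beta_lb (o : 'I_m) : \sum_a X o a * (1 - gh g (lev o.+1 a)) <= beta o.
Proof. by apply: ler_sum => a _; exact: beta_term. Qed.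

Lemma beta_ge0 (o : 'I_m) : 0 <= beta o.
Proof.
apply: le_trans (beta_lb o); apply: sumr_ge0 => a _; apply: mulr_ge0; first exact: X_ge0.
rewrite subr_ge0 gh_le1 //; by case/andP: (lev_bd o.+1 a).
Qed.

Lemma dual_usw (o : 'I_m) a : a \in E o -> cU g <= Phi g (lev m a) + beta o.
Proof.
move=> aE.
have hm : Phi g (lev o.+1 a) <= Phi g (lev m a) by apply: (Phi_mono hg); apply: lev_mono.
have hb := beta_ge0 o.
have hsum : \sum_b X o b <= 1 by case: X_frac.
case: (ltP (\sum_b X o b) 1) => hs.
  have e : lev o.+1 a = 1.
    rewrite lev_succ X_eq; apply: (sum_lt1_full hg (lev_bd' o)) => //.
    by move: hs; under eq_bigr do rewrite X_eq.
  by move: hm; rewrite e (Phi1 hg); lra.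
have hs1 : \sum_b X o b = 1 by apply/eqP; rewrite eq_le hsum hs.
have hl' := lev_bd o.+1 a; case/andP: hl' => hl0 hl1.
have key : 1 - gh g (lev o.+1 a) <= beta o.
  apply: le_trans (beta_lb o).
  apply: (@le_trans _ _ (\sum_b X o b * (1 - gh g (lev o.+1 a)))).
    by rewrite -mulr_suml hs1 mul1r.
  apply: ler_sum => b _.
  have [->|xp] := eqVneq (X o b) 0; first by rewrite !mul0r.
  have xpos : 0 < X o b by rewrite lt_neqAle eq_sym xp X_ge0.
  apply: ler_wpM2l; first exact: X_ge0.
  rewrite lerD2l lerN2.
  rewrite X_eq in xpos.
  case: (spec_usw hg (lev_bd' o) xpos aE) => hb'.
    rewrite -X_eq -lev_succ in hb'.
    by rewrite gh_small // (u_le_gh hg).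
  rewrite -!X_eq -!lev_succ in hb'.
  exact: (gh_mono hg).
have := Phi_gh hg hl0 hl1; lra.
Qed.

Lemma usw_decomp : usw X = \sum_a Phi g (lev m a) + \sum_o beta o.
Proof.
rewrite /beta exchange_big /= -big_split /= /usw.
apply: eq_bigr => a _.
rewrite sumrB sum_D lev0 (Phi0 hg) subr0 /agent_val; lra.
Qed.

Lemma usw_bound xstar : frac_matching E xstar -> cU g * usw xstar <= usw X.
Proof.
case=> xs0 xsE xso xsa.
rewrite usw_decomp /usw /agent_val mulr_sumr.
apply: (@le_trans _ _ (\sum_a \sum_o xstar o a * (Phi g (lev m a) + beta o))).
  apply: ler_sum => a _; rewrite mulr_sumr; apply: ler_sum => o _.
  case: (boolP (a \in E o)) => aE.
    by rewrite mulrC; apply: ler_wpM2l => //; exact: dual_usw.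
  by rewrite xsE // mulr0 mul0r.
rewrite (eq_bigr (fun a => \sum_o xstar o a * Phi g (lev m a) + \sum_o xstar o a * beta o)); last first.
  by move=> a _; rewrite -big_split; apply: eq_bigr => o _; rewrite mulrDr.
rewrite big_split /= [Y in _ + Y <= _]exchange_big /=.
apply: lerD.
  apply: ler_sum => a _; rewrite -mulr_suml.
  have := xsa a; have : 0 <= Phi g (lev m a) by apply: Phi_ge0 => //; case/andP: (lev_bd m a).
  nra.
apply: ler_sum => o _; rewrite -mulr_suml.
have := xso o; have := beta_ge0 o; nra.
Qed.


Definition betaC (i : 'I_k) (o : 'I_m) :=
  \big[Num.max/0]_(b | (b \in E o) && (cls b == i)) (1 - gC g (lev o.+1 b)).

Lemma betaC_ge0 i o : 0 <= betaC i o.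
Proof. exact: bmax_ge0. Qed.

Lemma dual_cef i (o : 'I_m) a : a \in E o -> cls a = i -> cC g <= Psi g (lev m a) + betaC i o.
Proof.
move=> aE ca.
have hm : Psi g (lev o.+1 a) <= Psi g (lev m a) by apply: Psi_mono; apply: lev_mono.
have hb : 1 - gC g (lev o.+1 a) <= betaC i o.
  apply: (@bmax_ub _ _ (fun b => (b \in E o) && (cls b == i)) (fun b => 1 - gC g (lev o.+1 b))).
  by rewrite aE ca eqxx.
have := Psi_gC g (lev o.+1 a).
lra.
Qed.

Lemma cef_item i j (o : 'I_m) :
  (\sum_(a | cls a == j) X o a) * betaC i o <=
  \sum_(a | cls a == i) (X o a - (Psi g (lev o.+1 a) - Psi g (lev o a))).
Proof.
have step1 : \sum_(a | cls a == i) X o a * betaC i o <=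
    \sum_(a | cls a == i) (X o a - (Psi g (lev o.+1 a) - Psi g (lev o a))).
  apply: ler_sum => a ca.
  have h := Psi_diff g (lev_step_mono o a).
  have e2 : lev o.+1 a - lev o a = X o a by rewrite lev_succ; lra.
  rewrite e2 in h.
  apply: (@le_trans _ _ (X o a * (1 - gC g (lev o.+1 a)))); last by lra.
  have [->|xp] := eqVneq (X o a) 0; first by rewrite !mul0r.
  have xpos : 0 < X o a by rewrite lt_neqAle eq_sym xp X_ge0.
  apply: ler_wpM2l; first exact: X_ge0.
  apply: bmax_le; first by rewrite subr_ge0 gC_le1.
  move=> b /andP[bE cb].
  rewrite lerD2l lerN2; apply: gC_mono.
  have xpos' := xpos; rewrite X_eq in xpos'.
  have hcl : cls a = cls b by move/eqP: ca => ->; move/eqP: cb => ->.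
  have := spec_same_class hg (lev_bd' o) xpos' bE hcl.
  by rewrite -!X_eq -!lev_succ.
apply: le_trans step1.
rewrite -mulr_suml.
have hA : betaC i o = 0 \/ \sum_(a | cls a == j) X o a <= \sum_(a | cls a == i) X o a.
  case: (bmax_cases (fun b => (b \in E o) && (cls b == i)) (fun b => 1 - gC g (lev o.+1 b))) => [e0|[b /andP[bE cb] eb]].
    by left.
  rewrite -/(betaC i o) in eb.
  case: (ltP (gC g (lev o.+1 b)) 1) => hgc; last first.
    left; apply/eqP; rewrite eq_le betaC_ge0 andbT eb; lra.
  right.
  have hlt := gC_lt1 hgc.
  rewrite lev_succ X_eq in hlt.
  have := spec_cef hg (lev_bd' o) bE hlt j.
  move/eqP: cb => <-.
  have e1 : forall i', \sum_(a | cls a == i') X o a = \sum_(a | cls a == i') step g cls (lev o) (E o) a.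
    by move=> i'; apply: eq_bigr => a _; exact: X_eq.
  by rewrite !e1.
case: hA => [->|hA]; first by rewrite !mulr0.
by apply: ler_wpM2r => //; exact: betaC_ge0.
Qed.

Lemma V_ge i j :
  \sum_(a | cls a == i) Psi g (lev m a) + \sum_o class_alloc cls X j o * betaC i o
  <= class_val cls X i.
Proof.
have H : \sum_o class_alloc cls X j o * betaC i o <=
   \sum_o \sum_(a | cls a == i) (X o a - (Psi g (lev o.+1 a) - Psi g (lev o a))).
  by apply: ler_sum => o _; exact: cef_item.
rewrite exchange_big /= in H.
have e : forall a, \sum_o (X o a - (Psi g (lev o.+1 a) - Psi g (lev o a))) =
   agent_val X a - Psi g (lev m a).
  by move=> a; rewrite sumrB sum_D lev0 (Psi0 hg) subr0.
rewrite (eq_bigr _ (fun a _ => e a)) sumrB in H.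
rewrite /class_val; lra.
Qed.

Lemma opt_le i j (z : 'I_m -> 'I_n -> R) :
  (forall o a, 0 <= z o a) ->
  (forall o a, (a \notin E o) || (cls a != i) -> z o a = 0) ->
  (forall o, \sum_(a < n) z o a <= class_alloc cls X j o) ->
  (forall a, \sum_(o < m) z o a <= 1) ->
  cC g * (\sum_(o < m) \sum_(a < n | cls a == i) z o a) <=
  \sum_(a | cls a == i) Psi g (lev m a) + \sum_o class_alloc cls X j o * betaC i o.
Proof.
move=> z0 zE zo za.
rewrite mulr_sumr.
apply: (@le_trans _ _ (\sum_o \sum_(a | cls a == i) z o a * (Psi g (lev m a) + betaC i o))).
  apply: ler_sum => o _; rewrite mulr_sumr; apply: ler_sum => a ca.
  case: (boolP (a \in E o)) => aE.
    rewrite mulrC; apply: ler_wpM2l => //; apply: dual_cef => //; exact/eqP.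
  by rewrite zE ?aE // mulr0 mul0r.
rewrite (eq_bigr (fun o => \sum_(a | cls a == i) z o a * Psi g (lev m a) + \sum_(a | cls a == i) z o a * betaC i o)); last first.
  by move=> o _; rewrite -big_split; apply: eq_bigr => a _; rewrite mulrDr.
rewrite big_split /= [Y in Y + _ <= _]exchange_big /=.
apply: lerD.
  apply: ler_sum => a _; rewrite -mulr_suml.
  have := za a; have : 0 <= Psi g (lev m a) by apply: Psi_ge0 => //; case/andP: (lev_bd m a).
  nra.
apply: ler_sum => o _; rewrite -mulr_suml.
have hz : \sum_(a | cls a == i) z o a <= class_alloc cls X j o.
  apply: le_trans (zo o).
  rewrite [Y in _ <= Y](bigID (fun a => cls a == i)) /= lerDl.
  by apply: sumr_ge0 => a _.
have := betaC_ge0 i o; have : 0 <= \sum_(a | cls a == i) z o a by apply: sumr_ge0.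
nra.
Qed.

Lemma cef_bound i j : cC g * opt_val cls E i (class_alloc cls X j) <= class_val cls X i.
Proof.
have V0 : 0 <= class_val cls X i.
  by apply: sumr_ge0 => a _; apply: sumr_ge0 => o _; exact: X_ge0.
have c0 : 0 <= cC g.
  rewrite /cC subr_ge0 -[X in _ <= X]expR0 ler_expR; case/andP: hg => ? ?; lra.
case: (eqVneq (cC g) 0) => [->|cne]; first by rewrite mul0r.
have cpos : 0 < cC g by rewrite lt_neqAle eq_sym cne c0.
set K := \sum_(a | cls a == i) Psi g (lev m a) + \sum_o class_alloc cls X j o * betaC i o.
have hs : opt_val cls E i (class_alloc cls X j) <= K / cC g.
  apply: ge_sup.
    exists 0; exists (fun _ _ => 0); split => //.
    - by move=> o; rewrite big1 //; apply: sumr_ge0 => a _; exact: X_ge0.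
    - by move=> a; rewrite big1 // ler01.
    - by rewrite big1 // => o _; rewrite big1.
  move=> v [z [z0 zE zo za ->]]; rewrite ler_pdivlMr // mulrC; exact: opt_le.
apply: le_trans (V_ge i j).
have := ler_wpM2l c0 hs.
have e : cC g * (K / cC g) = K by rewrite mulrCA mulfV // mulr1.
by rewrite e.
Qed.

End Alg.

Theorem theorem4 (R : realType) (gamma : R) :
  0 <= gamma <= 1 ->
  exists (r : nat) (p : 'I_r -> R) (A : 'I_r -> online_alg R),
    [/\ randomized_alg p A,
        is_USW p A (1 - expR (gamma - 1) / (gamma + 1)) &
        is_CEF p A (1 - expR (- gamma))].
Proof.
move=> hg.
exists 1%N, (fun _ => 1), (fun _ => alg gamma).
split.
- split.
  + by move=> _; exact: ler01.
  + by rewrite big_ord1.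
  + by move=> _ n k cls m E; exact: (X_frac hg).
- move=> n k cls m E xstar hx; rewrite /expect big_ord1 mul1r.
  exact: (usw_bound hg cls hx).
- move=> n k cls m E i j; rewrite /expect !big_ord1 !mul1r.
  exact: (cef_bound hg cls E i j).
Qed.
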